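(* Let $n\ge1$, $L>0$, $D\subseteq\mathbb{R}$ compact, and consider an $n$-qubit system with dynamics $\rho_k=T(u_k)\rho_{k-1}$ and output $\bar y_k=h(\rho_k)$, where $h(\rho)$ is a real polynomial (of some degree $R$, with constant term) in the variables $\langle Z^{(i)}\rangle={\rm Tr}(\rho Z^{(i)})$, $i=1,\dots,n$. Suppose that (i) there is $0<\epsilon\le1$ with $\sup_{A\in H_0(2^n),A\ne0}\|T(x)A\|_2/\|A\|_2\le1-\epsilon$ for all $x\in D\cap[-L,L]$, and (ii) $T$ is continuous in the sense that for every $\epsilon'>0$ there is $\delta_T(\epsilon')>0$ with $\|T(x)-T(y)\|_{2-2}<\epsilon'$ whenever $x,y\in D\cap[-L,L]$ and $|x-y|<\delta_T(\epsilon')$. Then for any null sequence $w$, the induced filter $M^T$ and its corresponding functional $F^T$ are $w$-fading memory.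
   Context: $T(x)$, $x\in D\cap[-L,L]$, are CPTP maps on $2^n\times 2^n$ complex matrices; $H_0(2^n)$ is the space of traceless Hermitian $2^n\times2^n$ matrices; $\|\cdot\|_2$ is the Schatten 2-norm and $\|S\|_{2-2}=\sup_{\|A\|_2=1}\|SA\|_2$ over all complex $2^n\times2^n$ matrices $A$. $Z^{(i)}$ is the Pauli $Z$ operator acting on qubit $i$. $K_L(D)$: real sequences $\{u_k\}_{k\in\mathbb{Z}}$ with values in $D\cap[-L,L]$; $K_L^-(D)$: same indexed by $\mathbb{Z}^-=\{\dots,-1,0\}$. The induced filter is $M^T(u)_k=h\big(\lim_{N\to\infty}T(u_k)\cdots T(u_{k-N})\rho_{-N}\big)$ (the limit exists and is independent of the density operators $\rho_{-N}$ under (i)); its functional is $F^T(u_-)=M^T(u)_0$ for any $u$ extending $u_-\in K_L^-(D)$. A null sequence is a decreasing $w:\{0,1,\dots\}\to(0,1]$ with $w_k\to0$; $\|u\|_w=\sup_{k\le0}|u_k|w_{-k}$. A time-invariant causal filter is $w$-fading memory iff its functional is continuous on $(K_L^-(D),\|\cdot\|_w)$. *)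

(* Defs.v *)
From HB Require Import structures.
From mathcomp Require Import all_boot all_order all_algebra.
From mathcomp Require Import complex.
From mathcomp Require Import all_classical all_reals all_analysis.
Set Implicit Arguments. Unset Strict Implicit. Unset Printing Implicit Defensive.
Import Order.TTheory GRing.Theory Num.Theory.
Import numFieldNormedType.Exports.
Local Open Scope classical_set_scope.
Local Open Scope ring_scope.

Notation Mat R n := ('M[R[i]]_(2 ^ n)).

Section QRC.
Variable R : realType.

(* Positive semidefiniteness of a matrix indexed by a finite type I:
   v^* X v >= 0 (real, nonnegative) for every complex vector v. *)
Definition psd_fun (I : finType) (X : I -> I -> R[i]) : Prop :=
  forall v : I -> R[i],
    0 <= \sum_(p : I) \sum_(q : I) conjc (v p) * X p q * v q.

Definition psd_mx (N : nat) (A : 'M[R[i]]_N) : Prop := psd_fun (fun i j => A i j).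

Definition density (N : nat) (A : 'M[R[i]]_N) : Prop := psd_mx A /\ \tr A = 1.

(* Hermitian / traceless Hermitian matrices (the space H_0) *)
Definition hermitian (N : nat) (A : 'M[R[i]]_N) : Prop :=
  forall i j, A j i = conjc (A i j).
Definition traceless_herm (N : nat) (A : 'M[R[i]]_N) : Prop :=
  hermitian A /\ \tr A = 0.

(* complete positivity: for every k, id_k (x) S maps positive semidefinite
   block matrices (indexed by 'I_k * 'I_N) to positive semidefinite ones *)
Definition completely_positive (N : nat) (S : 'M[R[i]]_N -> 'M[R[i]]_N) : Prop :=
  forall (k : nat) (X : ('I_k * 'I_N)%type -> ('I_k * 'I_N)%type -> R[i]),
    psd_fun X ->
    psd_fun (fun p q => S (\matrix_(i, j) X (p.1, i) (q.1, j)) p.2 q.2).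

Definition trace_preserving (N : nat) (S : 'M[R[i]]_N -> 'M[R[i]]_N) : Prop :=
  forall A, \tr (S A) = \tr A.

Definition CPTP (N : nat) (S : 'M[R[i]]_N -> 'M[R[i]]_N) : Prop :=
  linear S /\ completely_positive S /\ trace_preserving S.

Definition hs_norm (N : nat) (A : 'M[R[i]]_N) : R :=
  Num.sqrt (\sum_i \sum_j complex.Re (A i j * conjc (A i j))).

Definition opnorm22 (N : nat) (S : 'M[R[i]]_N -> 'M[R[i]]_N) : R :=
  sup [set r | exists A : 'M[R[i]]_N, hs_norm A = 1 /\ r = hs_norm (S A)].

(* Pauli Z acting on qubit i of an n-qubit register: diagonal matrix whose
   entry at basis state j is (-1)^(bit i of j) *)
Definition pauliZ (n : nat) (i : 'I_n) : Mat R n :=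
  \matrix_(j, k) ((j == k)%:R * (if odd (j %/ 2 ^ i) then -1 else 1)).

(* expectation value <Z^(i)> = Tr(rho Z^(i)) (real for Hermitian rho) *)
Definition expZ (n : nat) (rho : Mat R n) (i : 'I_n) : R :=
  complex.Re (\tr (rho *m pauliZ i)).

Definition poly_obs (n d : nat) (c : {ffun 'I_n -> 'I_d.+1} -> R)
    (rho : Mat R n) : R :=
  \sum_(a : {ffun 'I_n -> 'I_d.+1} | (\sum_i (a i : nat) <= d)%N)
     c a * \prod_i expZ rho i ^+ a i.

Definition mx_conv_to (N : nat) (X : nat -> 'M[R[i]]_N) (Y : 'M[R[i]]_N) : Prop :=
  (fun m => hs_norm (X m - Y)) @ \oo --> (0 : R).

(* evolve T u k m X = T(u_k) T(u_{k-1}) ... T(u_{k-m}) X *)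
Fixpoint evolve (N : nat) (T : R -> 'M[R[i]]_N -> 'M[R[i]]_N) (u : int -> R)
    (k : int) (m : nat) (X : 'M[R[i]]_N) : 'M[R[i]]_N :=
  match m with
  | O => T (u k) X
  | m'.+1 => T (u k) (evolve T u (k - 1) m' X)
  end.

(* the state at time k: the limit of T(u_k)...T(u_{k-m}) rho_{-m} as m -> oo,
   the same for every choice of density operators rho_{-m} *)
Definition limit_state (N : nat) (T : R -> 'M[R[i]]_N -> 'M[R[i]]_N)
    (u : int -> R) (k : int) : 'M[R[i]]_N :=
  xget 0 [set Y | forall rho : nat -> 'M[R[i]]_N,
      (forall m, density (rho m)) -> mx_conv_to (fun m => evolve T u k m (rho m)) Y].

Definition induced_filter (N : nat) (T : R -> 'M[R[i]]_N -> 'M[R[i]]_N)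
    (h : 'M[R[i]]_N -> R) (u : int -> R) (k : int) : R :=
  h (limit_state T u k).

Definition DL (D : set R) (L : R) : set R := D `&` `[- L, L].

Definition KL (D : set R) (L : R) : set (int -> R) :=
  [set u | forall k, DL D L (u k)].

(* K_L^-(D): left-infinite sequences; u_ : nat -> R with u_ j = u_{-j} *)
Definition KLm (D : set R) (L : R) : set (nat -> R) :=
  [set u | forall j, DL D L (u j)].

Definition extend (um : nat -> R) : int -> R :=
  fun k => match k with Posz _ => um 0%N
                      | Negz m => um m.+1 end.

Definition functional (M : (int -> R) -> int -> R) (um : nat -> R) : R :=
  M (extend um) 0.

Definition null_seq (w : nat -> R) : Prop :=
  (forall k, 0 < w k <= 1) /\ (forall k, w k.+1 <= w k) /\ w @ \oo --> (0 : R).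

Definition wnorm (w : nat -> R) (u : nat -> R) : R :=
  sup (range (fun j => `|u j| * w j)).

Definition w_continuous (D : set R) (L : R) (w : nat -> R) (F : (nat -> R) -> R)
    : Prop :=
  forall u, KLm D L u -> forall e : R, 0 < e -> exists2 d : R, 0 < d &
    forall v, KLm D L v -> wnorm w (u - v) < d -> `|F u - F v| < e.

Definition causal (D : set R) (L : R) (M : (int -> R) -> int -> R) : Prop :=
  forall u v k, KL D L u -> KL D L v -> (forall j, (j <= k)%R -> u j = v j) ->
    M u k = M v k.

Definition time_invariant (D : set R) (L : R) (M : (int -> R) -> int -> R) : Prop :=
  forall u k, KL D L u -> M (fun j => u (j + 1)%R) k = M u (k + 1)%R.

(* a time-invariant causal filter is w-fading memory iff its functional is
   continuous on (K_L^-(D), ||.||_w) *)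
Definition fading_memory_filter (D : set R) (L : R) (w : nat -> R)
    (M : (int -> R) -> int -> R) : Prop :=
  time_invariant D L M /\ causal D L M /\ w_continuous D L w (functional M).

End QRC.

(* Main.v *)
Require Import Defs.
From HB Require Import structures.
From mathcomp Require Import all_boot all_order all_algebra.
From mathcomp Require Import complex.
From mathcomp Require Import all_classical all_reals all_analysis.
From mathcomp Require Import ring lra.
Set Implicit Arguments. Unset Strict Implicit. Unset Printing Implicit Defensive.
Import Order.TTheory GRing.Theory Num.Theory.
Import numFieldNormedType.Exports.
Local Open Scope classical_set_scope.
Local Open Scope ring_scope.

Section Aux.
Variable R : realType.
Local Notation C := R[i].
Definition sq (z : C) : R := complex.Re z ^+ 2 + complex.Im z ^+ 2.
Lemma Re_mulJ (z : C) : complex.Re (z * conjc z) = sq z.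
Proof. case: z => a b; rewrite /sq /=. ring. Qed.
Lemma sqM (z w : C) : sq (z * w) = sq z * sq w.
Proof. case: z => a b; case: w => c d; rewrite /sq /=. ring. Qed.
Lemma sq_ge0 z : 0 <= sq z.
Proof. by rewrite /sq addr_ge0 // sqr_ge0. Qed.
Lemma sqN z : sq (- z) = sq z.
Proof. case: z => a b; rewrite /sq /=. ring. Qed.
Lemma sqR (x : R) : sq (x%:C)%C = x ^+ 2.
Proof. rewrite /sq /=. ring. Qed.
Lemma ReB (z w : C) : complex.Re (z - w) = complex.Re z - complex.Re w.
Proof. by case: z => a b; case: w => c d. Qed.
Lemma ImB (z w : C) : complex.Im (z - w) = complex.Im z - complex.Im w.
Proof. by case: z => a b; case: w => c d. Qed.
Lemma ReD (z w : C) : complex.Re (z + w) = complex.Re z + complex.Re w.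
Proof. by case: z => a b; case: w => c d. Qed.
Lemma ImD (z w : C) : complex.Im (z + w) = complex.Im z + complex.Im w.
Proof. by case: z => a b; case: w => c d. Qed.
Lemma Re_sum (I : Type) (s : seq I) (P : pred I) (F : I -> C) :
  complex.Re (\sum_(i <- s | P i) F i) = \sum_(i <- s | P i) complex.Re (F i).
Proof.
elim: s => [|a s IH]; first by rewrite !big_nil.
rewrite !big_cons; case: (P a) => //.
by rewrite -IH; case: (F a) => x y; case: (\sum_(j <- s | P j) F j) => u v.
Qed.

Variable N : nat.
Implicit Types A B : 'M[C]_N.
Definition hs2 A : R := \sum_i \sum_j sq (A i j).
Lemma hs2_ge0 A : 0 <= hs2 A.
Proof. by apply: sumr_ge0 => i _; apply: sumr_ge0 => j _; exact: sq_ge0. Qed.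
Lemma hs_normE A : hs_norm A = Num.sqrt (hs2 A).
Proof.
rewrite /hs_norm /hs2; congr Num.sqrt; apply: eq_bigr => i _.
by apply: eq_bigr => j _; rewrite Re_mulJ.
Qed.
Lemma hs_norm_ge0 A : 0 <= hs_norm A.
Proof. by rewrite hs_normE sqrtr_ge0. Qed.
Lemma hs_norm_sqr A : hs_norm A ^+ 2 = hs2 A.
Proof. by rewrite hs_normE sqr_sqrtr // hs2_ge0. Qed.
Lemma sq_le_hs2 A i j : sq (A i j) <= hs2 A.
Proof.
rewrite /hs2 (bigD1 i) //= (bigD1 j) //= -addrA lerDl addr_ge0 //.
  by apply: sumr_ge0 => k _; exact: sq_ge0.
by apply: sumr_ge0 => k _; apply: sumr_ge0 => l _; exact: sq_ge0.
Qed.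
Lemma le_hs_of_sq (x : R) A : x ^+ 2 <= hs2 A -> `|x| <= hs_norm A.
Proof.
by move=> h; rewrite hs_normE -sqrtr_sqr ler_sqrt // hs2_ge0.
Qed.
Lemma Re_le_hs A i j : `|complex.Re (A i j)| <= hs_norm A.
Proof.
apply: le_hs_of_sq; apply: le_trans (sq_le_hs2 A i j).
by rewrite /sq lerDl sqr_ge0.
Qed.
Lemma Im_le_hs A i j : `|complex.Im (A i j)| <= hs_norm A.
Proof.
apply: le_hs_of_sq; apply: le_trans (sq_le_hs2 A i j).
by rewrite /sq lerDr sqr_ge0.
Qed.
Lemma hs_norm_eq0 A : hs_norm A = 0 -> A = 0.
Proof.
move=> h; apply/matrixP => i j; rewrite mxE.
have h1 := Re_le_hs A i j; have h2 := Im_le_hs A i j.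
rewrite h in h1 h2.
have e1 : complex.Re (A i j) = 0 by apply/normr0_eq0/le_anti; rewrite h1 normr_ge0.
have e2 : complex.Im (A i j) = 0 by apply/normr0_eq0/le_anti; rewrite h2 normr_ge0.
by move: e1 e2; case: (A i j) => a b /= -> ->.
Qed.
Lemma hs2N A : hs2 (- A) = hs2 A.
Proof.
by apply: eq_bigr => i _; apply: eq_bigr => j _; rewrite mxE sqN.
Qed.
Lemma hs_normN A : hs_norm (- A) = hs_norm A.
Proof. by rewrite !hs_normE hs2N. Qed.
Lemma hs_normB A B : hs_norm (A - B) = hs_norm (B - A).
Proof. by rewrite -hs_normN opprB. Qed.
Lemma hs2Z (z : C) A : hs2 (z *: A) = sq z * hs2 A.
Proof.
rewrite /hs2 mulr_sumr; apply: eq_bigr => i _; rewrite mulr_sumr.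
by apply: eq_bigr => j _; rewrite mxE sqM.
Qed.
Definition nz (z : C) : R := Num.sqrt (sq z).
Lemma nz_ge0 z : 0 <= nz z. Proof. exact: sqrtr_ge0. Qed.
Lemma hs_normZ (z : C) A : hs_norm (z *: A) = nz z * hs_norm A.
Proof. by rewrite !hs_normE hs2Z sqrtrM // sq_ge0. Qed.
Lemma nz_le_hs A i j : nz (A i j) <= hs_norm A.
Proof. by rewrite /nz hs_normE ler_sqrt // ?sq_le_hs2 // hs2_ge0. Qed.
Lemma nzR (x : R) : nz (x%:C)%C = `|x|.
Proof. by rewrite /nz sqR sqrtr_sqr. Qed.
Lemma hs_norm0 : hs_norm (0 : 'M[C]_N) = 0.
Proof.
rewrite hs_normE /hs2 big1 ?sqrtr0 // => i _; rewrite big1 // => j _.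
by rewrite mxE /sq /= expr0n /= addr0.
Qed.

Definition ip A B : R :=
  \sum_i \sum_j (complex.Re (A i j) * complex.Re (B i j) + complex.Im (A i j) * complex.Im (B i j)).
Lemma hs2D A B : hs2 (A + B) = hs2 A + hs2 B + 2 * ip A B.
Proof.
rewrite /hs2 /ip mulr_sumr -!big_split; apply: eq_bigr => i _ /=.
rewrite mulr_sumr -!big_split; apply: eq_bigr => j _ /=.
rewrite mxE /sq ReD ImD. ring.
Qed.
Lemma amgm (t x y : R) : 0 < t -> 2 * (x * y) <= t * x ^+ 2 + y ^+ 2 / t.
Proof.
move=> t0.
have -> : t * x ^+ 2 + y ^+ 2 / t = 2 * (x * y) + (t * x - y) ^+ 2 / t.
  by field; rewrite gt_eqF.
by rewrite lerDl divr_ge0 // ?sqr_ge0 // ltW.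
Qed.
Lemma ip_amgm A B t : 0 < t -> 2 * ip A B <= t * hs2 A + hs2 B / t.
Proof.
move=> t0; rewrite /ip /hs2 mulr_sumr mulr_sumr mulr_suml -big_split /=.
apply: ler_sum => i _; rewrite mulr_sumr mulr_sumr mulr_suml -big_split /=.
apply: ler_sum => j _; rewrite /sq mulrDr mulrDr mulrDl.
have := amgm (complex.Re (A i j)) (complex.Re (B i j)) t0.
have := amgm (complex.Im (A i j)) (complex.Im (B i j)) t0.
lra.
Qed.
Lemma ip_le A B : ip A B <= hs_norm A * hs_norm B.
Proof.
have [a0|a0] := eqVneq (hs_norm A) 0.
  rewrite a0 mul0r (hs_norm_eq0 a0) /ip big1 // => i _; rewrite big1 // => j _.
  by rewrite mxE /= mul0r mul0r addr0.
have [b0|b0] := eqVneq (hs_norm B) 0.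
  rewrite b0 mulr0 (hs_norm_eq0 b0) /ip big1 // => i _; rewrite big1 // => j _.
  by rewrite mxE /= !mulr0 addr0.
have ap : 0 < hs_norm A by rewrite lt_def a0 hs_norm_ge0.
have bp : 0 < hs_norm B by rewrite lt_def b0 hs_norm_ge0.
have := ip_amgm A B (divr_gt0 bp ap).
rewrite -!hs_norm_sqr.
have -> : hs_norm B / hs_norm A * hs_norm A ^+ 2 + hs_norm B ^+ 2 / (hs_norm B / hs_norm A)
   = 2 * (hs_norm A * hs_norm B) by field; rewrite a0 b0.
by rewrite ler_pM2l.
Qed.
Lemma hs_normD A B : hs_norm (A + B) <= hs_norm A + hs_norm B.
Proof.
rewrite hs_normE -(@ger0_norm _ (hs_norm A + hs_norm B)) ?addr_ge0 ?hs_norm_ge0 //.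
rewrite -sqrtr_sqr ler_sqrt ?sqr_ge0 // hs2D sqrrD -!hs_norm_sqr.
have := ip_le A B; lra.
Qed.
Lemma hs_norm_tri A B X : hs_norm (A - B) <= hs_norm (A - X) + hs_norm (X - B).
Proof.
have -> : A - B = (A - X) + (X - B) by rewrite addrA subrK.
exact: hs_normD.
Qed.
Lemma hs_norm_sum (I : Type) (s : seq I) (P : pred I) (F : I -> 'M[C]_N) :
  hs_norm (\sum_(i <- s | P i) F i) <= \sum_(i <- s | P i) hs_norm (F i).
Proof.
elim: s => [|a s IH]; first by rewrite !big_nil hs_norm0.
rewrite !big_cons; case: (P a) => //.
by apply: le_trans (hs_normD _ _) _; rewrite lerD2l.
Qed.
End Aux.

Section Lin.
Variable R : realType. Variable N : nat.
Local Notation M := 'M[R[i]]_N.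
Variable S : M -> M.
Hypothesis lS : linear S.
Lemma lin0 : S 0 = 0.
Proof.
have := lS 1 0 0; rewrite !scale1r !addr0 => h.
by apply: (addrI (S 0)); rewrite addr0 -h.
Qed.
Lemma linD u v : S (u + v) = S u + S v.
Proof. by have := lS 1 u v; rewrite !scale1r. Qed.
Lemma linB u v : S (u - v) = S u - S v.
Proof. by have := lS (-1) v u; rewrite !scaleN1r => h; rewrite [u - v]addrC h addrC. Qed.
Lemma linZ a u : S (a *: u) = a *: S u.
Proof. by have := lS a u 0; rewrite !addr0 lin0 addr0. Qed.
Lemma lin_sum (I : Type) (s : seq I) (P : pred I) (F : I -> M) :
  S (\sum_(i <- s | P i) F i) = \sum_(i <- s | P i) S (F i).
Proof.
elim: s => [|a s IH]; first by rewrite !big_nil lin0.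
by rewrite !big_cons; case: (P a); rewrite ?linD IH.
Qed.
End Lin.

Section Dens.
Variable R : realType. Variable N : nat.
Local Notation C := R[i].
Local Notation M := 'M[R[i]]_N.

Lemma sum_delta (F : 'I_N -> C) p a : \sum_s F s * ((s == p)%:R * a) = F p * a.
Proof.
rewrite (bigD1 p) //= eqxx mul1r big1 ?addr0 // => s /negbTE ->.
by rewrite mul0r mulr0.
Qed.
Lemma sum_delta2 (F : 'I_N -> C) p a : \sum_s ((s == p)%:R * a) * F s = a * F p.
Proof.
rewrite (bigD1 p) //= eqxx mul1r big1 ?addr0 // => s /negbTE ->.
by rewrite mul0r mul0r.
Qed.

Lemma psd_quad (X : M) : psd_mx X -> forall p q (a b : C),
  0 <= conjc a * (X p p * a + X p q * b) + conjc b * (X q p * a + X q q * b).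
Proof.
move=> H p q a b.
have := H (fun r => (r == p)%:R * a + (r == q)%:R * b).
have -> : (\sum_p0 \sum_q0 conjc ((p0 == p)%:R * a + (p0 == q)%:R * b) * X p0 q0 *
      ((q0 == p)%:R * a + (q0 == q)%:R * b)) =
   \sum_p0 ((p0 == p)%:R * conjc a + (p0 == q)%:R * conjc b) * (X p0 p * a + X p0 q * b).
  apply: eq_bigr => r _.
  under eq_bigr do rewrite -mulrA.
  rewrite -mulr_sumr; congr (_ * _).
    by rewrite rmorphD !rmorphM !rmorph_nat.
  by under eq_bigr do rewrite mulrDr; rewrite big_split /= !sum_delta.
rewrite (eq_bigr (fun r => (((r == p)%:R * conjc a) * (X r p * a + X r q * b)) +
   (((r == q)%:R * conjc b) * (X r p * a + X r q * b)))); last by move=> r _; rewrite mulrDl.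
by rewrite big_split /= sum_delta2 sum_delta2.
Qed.
End Dens.

Section Dens2.
Variable R : realType. Variable N : nat.
Local Notation C := R[i].
Local Notation M := 'M[R[i]]_N.

Lemma psd_entries (X : M) : psd_mx X -> forall p q,
  [/\ complex.Im (X p p) = 0, 0 <= complex.Re (X p p), X q p = conjc (X p q),
    - (complex.Re (X p p) + complex.Re (X q q)) <= 2 * complex.Re (X p q) <= complex.Re (X p p) + complex.Re (X q q) &
    - (complex.Re (X p p) + complex.Re (X q q)) <= 2 * complex.Im (X p q) <= complex.Re (X p p) + complex.Re (X q q)].
Proof.
move=> H p q.
have h1 := psd_quad H p q 1 0.
have h2 := psd_quad H q p 1 0.
have h3 := psd_quad H p q 1 1.
have h4 := psd_quad H p q 1 (-1).
have h5 := psd_quad H p q 1 (Complex 0 1).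
have h6 := psd_quad H p q 1 (Complex 0 (-1)).
move: h1 h2 h3 h4 h5 h6.
move: (X p p) (X p q) (X q p) (X q q) => [a1 a2] [b1 b2] [c1 c2] [d1 d2].
rewrite !lecE /= !(mulr0, mul0r, mulr1, mul1r, oppr0, addr0, add0r, subr0, sub0r, mulN1r, mulrN1, opprK, mulrN, mulNr).
move=> /andP[/eqP e1 g1] /andP[/eqP e2 g2] /andP[/eqP e3 g3] /andP[/eqP e4 g4] /andP[/eqP e5 g5] /andP[/eqP e6 g6].
split.
- by [].
- by [].
- congr Complex; lra.
- apply/andP; split; lra.
- apply/andP; split; lra.
Qed.

Lemma dens_Re_diag_le1 (X : M) : density X -> forall p, complex.Re (X p p) <= 1.
Proof.
case=> H tr p.
have : complex.Re (\tr X) = 1 by rewrite tr.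
rewrite /mxtrace Re_sum (bigD1 p) //= => <-.
rewrite lerDl; apply: sumr_ge0 => i _; by case: (psd_entries H i i).
Qed.

Lemma dens_entry_bound (X : M) : density X -> forall p q,
  -1 <= complex.Re (X p q) <= 1 /\ -1 <= complex.Im (X p q) <= 1.
Proof.
move=> dX p q; have [_ h1 _ /andP[r1 r2] /andP[i1 i2]] := psd_entries dX.1 p q.
have [_ h2 _ _ _] := psd_entries dX.1 q q.
have := dens_Re_diag_le1 dX p; have := dens_Re_diag_le1 dX q.
move=> a b; split; apply/andP; split; lra.
Qed.

Definition Bd : R := Num.sqrt (2 *+ N *+ N).
Lemma Bd_ge0 : 0 <= Bd. Proof. exact: sqrtr_ge0. Qed.

Lemma dens_hs (X : M) : density X -> hs_norm X <= Bd.
Proof.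
move=> dX; rewrite hs_normE /Bd ler_sqrt; last first.
  by rewrite !mulrn_wge0.
have -> : 2 *+ N *+ N = \sum_(i < N) \sum_(j < N) (2 : R).
  by rewrite sumr_const card_ord; congr (_ *+ _); rewrite sumr_const card_ord.
apply: ler_sum => i _; apply: ler_sum => j _.
have [/andP[a b] /andP[c d]] := dens_entry_bound dX i j.
rewrite /sq; nra.
Qed.

Lemma dens_sub_hs (X Y : M) : density X -> density Y -> hs_norm (X - Y) <= 2 * Bd.
Proof.
move=> dX dY; apply: le_trans (hs_normD _ _) _; rewrite hs_normN.
have := dens_hs dX; have := dens_hs dY; lra.
Qed.

Lemma dens_sub_herm (X Y : M) : density X -> density Y -> traceless_herm (X - Y).
Proof.
move=> dX dY; split.
  move=> i j; rewrite !mxE rmorphB.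
  have [_ _ e1 _ _] := psd_entries dX.1 i j.
  have [_ _ e2 _ _] := psd_entries dY.1 i j.
  by rewrite e1 e2.
by rewrite linearB /= dX.2 dY.2 subrr.
Qed.

Lemma sum_pair1 (I : finType) (F : 'I_1 * I -> C) : \sum_p F p = \sum_i F (ord0, i).
Proof.
rewrite (eq_bigr (fun p => F (p.1, p.2))); last by case.
by rewrite -(pair_bigA _ (fun a b => F (a, b))) big_ord1.
Qed.

Lemma psd_pair (I : finType) (Y : I -> I -> C) :
  psd_fun (fun p q : 'I_1 * I => Y p.2 q.2) <-> psd_fun Y.
Proof.
have E : forall v : 'I_1 * I -> C,
  \sum_p \sum_q conjc (v p) * Y p.2 q.2 * v q =
  \sum_i \sum_j conjc (v (ord0, i)) * Y i j * v (ord0, j).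
  move=> v; rewrite sum_pair1; apply: eq_bigr => i _; by rewrite sum_pair1.
split=> H v.
  have := H (fun p => v p.2); by rewrite E.
rewrite E; exact: (H (fun i => v (ord0, i))).
Qed.

Lemma cptp_dens (S : M -> M) (X : M) : CPTP S -> density X -> density (S X).
Proof.
case=> lS [cpS tpS] [pX tX]; split; last by rewrite tpS.
have h : psd_fun (fun p q : 'I_1 * 'I_N => S X p.2 q.2).
  have := cpS 1%N (fun p q => X p.2 q.2) (proj2 (psd_pair (fun i j => X i j)) pX).
  congr psd_fun; apply: funext => p; apply: funext => q; congr (S _ _ _).
  by apply/matrixP => i j; rewrite mxE.
exact: (proj1 (psd_pair (fun i j => S X i j)) h).
Qed.

Lemma linear_sub (S1 S2 : M -> M) : linear S1 -> linear S2 -> linear (fun A => S1 A - S2 A).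
Proof.
move=> l1 l2 a u v /=; rewrite l1 l2 scalerBr opprD addrACA //.
Qed.

Lemma opnorm_bound (S : M -> M) : linear S -> forall A, hs_norm (S A) <= opnorm22 S * hs_norm A.
Proof.
move=> lS.
pose K := \sum_i \sum_j hs_norm (S (delta_mx i j)).
have bnd : forall A, hs_norm (S A) <= hs_norm A * K.
  move=> A; rewrite {1}(matrix_sum_delta A) (lin_sum lS).
  apply: le_trans (hs_norm_sum _ _ _) _.
  rewrite /K mulr_sumr; apply: ler_sum => i _.
  rewrite (lin_sum lS); apply: le_trans (hs_norm_sum _ _ _) _.
  rewrite mulr_sumr; apply: ler_sum => j _.
  rewrite (linZ lS) hs_normZ ler_wpM2r ?hs_norm_ge0 //; exact: nz_le_hs.
have hub : has_ubound [set r | exists A : M, hs_norm A = 1 /\ r = hs_norm (S A)].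
  by exists K => _ [A [h1 ->]]; have := bnd A; rewrite h1 mul1r.
move=> A; have [a0|a0] := eqVneq (hs_norm A) 0.
  by rewrite a0 mulr0 (hs_norm_eq0 a0) (lin0 lS) hs_norm0.
have ap : 0 < hs_norm A by rewrite lt_def a0 hs_norm_ge0.
pose c := (hs_norm A)^-1.
have c0 : 0 < c by rewrite invr_gt0.
have : hs_norm (S ((c%:C)%C *: A)) <= opnorm22 S.
  apply: (ub_le_sup hub); exists ((c%:C)%C *: A); split=> //.
  by rewrite hs_normZ nzR ger0_norm ?(ltW c0) // mulVf.
rewrite (linZ lS) hs_normZ nzR ger0_norm ?(ltW c0) // mulrC -ler_pdivlMr //.
by rewrite /c invrK.
Qed.
End Dens2.

Section SLim.
Variable R : realType.
Definition slim (a e : nat -> R) := sup (range (fun m => a m - e m)).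
Lemma slimP a e : (forall m, 0 <= e m) ->
  (forall m m', (m <= m')%N -> `|a m - a m'| <= e m) ->
  forall m, `|a m - slim a e| <= e m.
Proof.
move=> e0 H.
have ub : forall m m', a m - e m <= a m' + e m'.
  move=> m m'; case: (leqP m m') => h.
    have := H _ _ h; rewrite ler_norml => /andP[h1 h2].
    have := e0 m'; lra.
  have := H _ _ (ltnW h); rewrite ler_norml => /andP[h1 h2].
  have := e0 m; lra.
have hub : has_ubound (range (fun m => a m - e m)).
  by exists (a 0%N + e 0%N) => _ [m _ <-]; exact: ub.
move=> m; rewrite ler_norml; apply/andP; split.
  have : slim a e <= a m + e m.
    apply: ge_sup; first by exists (a 0%N - e 0%N), 0%N.
    by move=> _ [m' _ <-]; exact: ub.
  lra.
have : a m - e m <= slim a e by apply: (ub_le_sup hub); exists m.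
lra.
Qed.
End SLim.

Section Evolve.
Variable R : realType. Variable N : nat.
Local Notation C := R[i].
Local Notation M := 'M[R[i]]_N.
Variable T : R -> M -> M.
Variable Dx : set R.
Variable q : R.
Hypothesis hq0 : 0 <= q.
Hypothesis hq1 : q < 1.
Hypothesis Hcptp : forall x, Dx x -> CPTP (T x).
Hypothesis Hcon : forall x, Dx x -> forall A : M, traceless_herm A -> hs_norm (T x A) <= q * hs_norm A.
Variable r0 : M.
Hypothesis hr0 : density r0.

Lemma evolve_dens (u : int -> R) (Hu : forall k, Dx (u k)) k m s :
  density s -> density (evolve T u k m s).
Proof.
move=> ds; elim: m k => [|m IH] k /=; apply: cptp_dens (Hcptp (Hu k)) _ => //.
Qed.

Lemma evolve_contr (u : int -> R) (Hu : forall k, Dx (u k)) k m s1 s2 :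
  density s1 -> density s2 ->
  hs_norm (evolve T u k m s1 - evolve T u k m s2) <= q ^+ m.+1 * hs_norm (s1 - s2).
Proof.
move=> d1 d2; elim: m k => [|m IH] k /=.
  rewrite -(linB (Hcptp (Hu k)).1) expr1.
  exact: Hcon (Hu k) _ (dens_sub_herm d1 d2).
rewrite -(linB (Hcptp (Hu k)).1).
apply: le_trans (Hcon (Hu k) (dens_sub_herm (evolve_dens Hu (k-1) m d1) (evolve_dens Hu (k-1) m d2))) _.
by rewrite exprS -mulrA ler_wpM2l.
Qed.

Lemma evolve_split (u : int -> R) k m j X :
  evolve T u k (m + j).+1 X = evolve T u k m (evolve T u (k - m%:Z - 1) j X).
Proof.
elim: m k => [|m IH] k.
  by rewrite add0n /= subr0.
rewrite addSn; transitivity (T (u k) (evolve T u (k - 1) (m + j).+1 X)); first by [].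
rewrite IH /=; congr (T _ (evolve _ _ _ _ (evolve _ _ _ _ _))).
rewrite -[m.+1]addn1 PoszD; ring.
Qed.

Lemma evolve_le (u : int -> R) (Hu : forall k, Dx (u k)) k m m' : (m <= m')%N ->
  exists2 s, density s & evolve T u k m' r0 = evolve T u k m s.
Proof.
rewrite leq_eqVlt => /orP[/eqP <-|h]; first by exists r0.
exists (evolve T u (k - m%:Z - 1) (m' - m.+1) r0); first exact: evolve_dens.
by rewrite -evolve_split -addSn subnKC.
Qed.

Definition Kc : R := 2 * Bd R N + Bd R N * (2 * Bd R N).

Lemma exists_lim (u : int -> R) (Hu : forall k, Dx (u k)) k :
  exists Y : M, forall s m, density s ->
    hs_norm (evolve T u k m s - Y) <= Kc * q ^+ m.+1.
Proof.
pose E m := evolve T u k m r0.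
pose e m := 2 * Bd R N * q ^+ m.+1.
have e0 : forall m, 0 <= e m.
  by move=> m; rewrite /e !mulr_ge0 ?exprn_ge0 ?Bd_ge0.
have HE : forall m m', (m <= m')%N -> hs_norm (E m - E m') <= e m.
  move=> m m' h; rewrite /E; have [s ds ->] := evolve_le Hu k h.
  apply: le_trans (evolve_contr Hu _ _ hr0 ds) _.
  rewrite /e mulrC ler_wpM2r ?exprn_ge0 //; exact: dens_sub_hs.
pose Y : M := \matrix_(i, j) Complex (slim (fun m => complex.Re (E m i j)) e)
                                      (slim (fun m => complex.Im (E m i j)) e).
have hRe : forall i j m, `|complex.Re (E m i j) - slim (fun m => complex.Re (E m i j)) e| <= e m.
  move=> i j; apply: slimP => // m m' h.
  apply: le_trans (HE _ _ h); have := Re_le_hs (E m - E m') i j; by rewrite !mxE ReB.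
have hIm : forall i j m, `|complex.Im (E m i j) - slim (fun m => complex.Im (E m i j)) e| <= e m.
  move=> i j; apply: slimP => // m m' h.
  apply: le_trans (HE _ _ h); have := Im_le_hs (E m - E m') i j; by rewrite !mxE ImB.
have HY : forall m, hs_norm (E m - Y) <= Bd R N * e m.
  move=> m; rewrite hs_normE -(@ger0_norm _ (Bd R N * e m)) ?mulr_ge0 ?Bd_ge0 ?exprn_ge0 //.
  rewrite -sqrtr_sqr ler_sqrt ?sqr_ge0 // exprMn /Bd sqr_sqrtr ?mulrn_wge0 //.
  have -> : 2 *+ N *+ N * e m ^+ 2 = \sum_(i < N) \sum_(j < N) (2 * e m ^+ 2).
    by rewrite sumr_const card_ord sumr_const card_ord -!mulrnAl.
  apply: ler_sum => i _; apply: ler_sum => j _.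
  rewrite !mxE /sq ReB ImB /=.
  have := hRe i j m; have := hIm i j m; rewrite !ler_norml => /andP[a b] /andP[c d].
  have := e0 m; nra.
exists Y; move=> s m ds.
apply: le_trans (hs_norm_tri _ _ (E m)) _.
have h1 := evolve_contr Hu k m ds hr0.
have h2 := dens_sub_hs ds hr0.
have h3 := HY m.
have q0 : 0 <= q ^+ m.+1 by rewrite exprn_ge0.
have : hs_norm (evolve T u k m s - E m) <= q ^+ m.+1 * (2 * Bd R N).
  by apply: le_trans h1 _; rewrite ler_wpM2l.
move: h3; rewrite /e /Kc; nra.
Qed.

Lemma Kc_ge0 : 0 <= Kc.
Proof. by rewrite /Kc addr_ge0 ?mulr_ge0 ?Bd_ge0. Qed.

Lemma cvg_geo (K : R) : (fun m => K * q ^+ m.+1) @ \oo --> (0 : R).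
Proof.
have -> : (fun m => K * q ^+ m.+1) = (fun m => (K * q) * q ^+ m).
  by apply: funext => m; rewrite exprS mulrA.
rewrite -(mulr0 (K * q)); apply: cvgMl_tmp; apply: cvg_expr.
by rewrite ger0_norm.
Qed.

Lemma lim_state_bound (u : int -> R) (Hu : forall k, Dx (u k)) k s m :
  density s -> hs_norm (evolve T u k m s - limit_state T u k) <= Kc * q ^+ m.+1.
Proof.
have [Y HY] := exists_lim Hu k.
suff -> : limit_state T u k = Y by exact: HY.
rewrite /limit_state; apply: xget_unique.
  move=> rho drho; rewrite /mx_conv_to.
  apply: (@squeeze_cvgr _ _ _ _ (cst 0) (fun m => Kc * q ^+ m.+1)); last 2 first.
  - exact: cvg_cst.
  - exact: cvg_geo.
  by apply: nearW => m0; rewrite hs_norm_ge0 (HY _ _ (drho m0)).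
move=> Y' HY'.
have cv := HY' (fun _ => r0) (fun _ => hr0); rewrite /mx_conv_to /= in cv.
have gcv : (fun m => hs_norm (evolve T u k m r0 - Y') + Kc * q ^+ m.+1) @ \oo --> (0 : R).
  by rewrite -[0 : R](addr0 0); apply: cvgD => //; exact: cvg_geo.
have : hs_norm (Y' - Y) <= lim ((fun m => hs_norm (evolve T u k m r0 - Y') + Kc * q ^+ m.+1) @ \oo).
  apply: limr_ge; first exact: cvgP gcv.
  apply: nearW => n0; rewrite hs_normB; apply: le_trans (hs_norm_tri _ _ (evolve T u k n0 r0)) _.
  by rewrite addrC lerD2l hs_normB (HY _ _ hr0).
rewrite (cvg_lim (@norm_hausdorff _ _) gcv) => h.
apply/eqP; rewrite -subr_eq0; apply/eqP/hs_norm_eq0/le_anti.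
by rewrite h hs_norm_ge0.
Qed.

Lemma evolve_diff (u v : int -> R) (Hu : forall k, Dx (u k)) (Hv : forall k, Dx (v k))
    k m s (eta : R) : 0 <= eta -> density s ->
  (forall j, (j <= m)%N -> opnorm22 (fun A => T (u (k - j%:Z)) A - T (v (k - j%:Z)) A) <= eta) ->
  hs_norm (evolve T u k m s - evolve T v k m s) <= m.+1%:R * (Bd R N * eta).
Proof.
move=> eta0 ds; elim: m k => [|m IH] k Hop /=.
  have := Hop 0%N (leqnn _); rewrite subr0 => h.
  apply: le_trans (opnorm_bound (linear_sub (Hcptp (Hu k)).1 (Hcptp (Hv k)).1) s) _.
  apply: le_trans (_ : _ <= eta * hs_norm s) _.
    by apply: ler_wpM2r => //; exact: hs_norm_ge0.
  rewrite mul1r; have := dens_hs ds; nra.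
set E1 := evolve T u (k - 1) m s.
set E2 := evolve T v (k - 1) m s.
have d1 : density E1 by exact: evolve_dens.
have d2 : density E2 by exact: evolve_dens.
rewrite -(subrKA (T (u k) E2)).
apply: le_trans (hs_normD _ _) _.
rewrite -(linB (Hcptp (Hu k)).1).
have h1 := Hcon (Hu k) (dens_sub_herm d1 d2).
have h2 : hs_norm (E1 - E2) <= m.+1%:R * (Bd R N * eta).
  apply: IH => j hj; have := Hop j.+1 hj.
  by have -> : k - j.+1%:Z = k - 1 - j%:Z by rewrite -[j.+1]addn1 PoszD; ring.
have h3 : hs_norm (T (u k) E2 - T (v k) E2) <= eta * Bd R N.
  have := Hop 0%N (leq0n _); rewrite subr0 => h.
  apply: le_trans (opnorm_bound (linear_sub (Hcptp (Hu k)).1 (Hcptp (Hv k)).1) E2) _.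
  apply: le_trans (_ : _ <= eta * hs_norm E2) _.
    by apply: ler_wpM2r => //; exact: hs_norm_ge0.
  by apply: ler_wpM2l => //; exact: dens_hs.
have h4 : q * hs_norm (E1 - E2) <= hs_norm (E1 - E2).
  by apply: ler_piMl; [exact: hs_norm_ge0 | exact: ltW].
rewrite -natr1 mulrDl mul1r mulrC.
have := hs_norm_ge0 (E1 - E2).
lra.
Qed.
End Evolve.

Section PCont.
Variable R : realType.
Variable I : Type.
Definition pcont (f : (I -> R) -> R) (z : I -> R) :=
  forall e, 0 < e -> exists2 d, 0 < d &
    forall z', (forall i, `|z' i - z i| < d) -> `|f z' - f z| < e.

Lemma pcont_ext f g z : (forall x, f x = g x) -> pcont g z -> pcont f z.
Proof.
move=> fg H e e0; have [d d0 Hd] := H e e0; exists d => // z' hz.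
by rewrite !fg; apply: Hd.
Qed.

Lemma pcont_cst (a : R) z : pcont (fun _ => a) z.
Proof. by move=> e e0; exists 1 => // z' _; rewrite subrr normr0. Qed.

Lemma pcont_proj i z : pcont (fun x => x i) z.
Proof. by move=> e e0; exists e => // z' hz; apply: hz. Qed.

Lemma pcont_add f g z : pcont f z -> pcont g z -> pcont (fun x => f x + g x) z.
Proof.
move=> pf pg e e0.
have e2 : 0 < e / 2 by rewrite divr_gt0.
have [d1 d10 H1] := pf _ e2; have [d2 d20 H2] := pg _ e2.
exists (Num.min d1 d2); first by rewrite lt_min d10 d20.
move=> z' hz.
have h1 : `|f z' - f z| < e / 2 by apply: H1 => i; have := hz i; rewrite lt_min => /andP[].
have h2 : `|g z' - g z| < e / 2 by apply: H2 => i; have := hz i; rewrite lt_min => /andP[].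
have -> : f z' + g z' - (f z + g z) = (f z' - f z) + (g z' - g z) by ring.
apply: le_lt_trans (ler_normD _ _) _; lra.
Qed.

Lemma pcont_mul f g z : pcont f z -> pcont g z -> pcont (fun x => f x * g x) z.
Proof.
move=> pf pg e e0.
pose A := `|f z| + 1; pose B := `|g z| + 1.
have A0 : 0 < A by rewrite /A ltr_wpDl.
have B0 : 0 < B by rewrite /B ltr_wpDl.
have c10 : 0 < e / (2 * B) by rewrite divr_gt0 // mulr_gt0.
have c20 : 0 < e / (2 * A) by rewrite divr_gt0 // mulr_gt0.
have [d1 d10 H1] := pf _ c10.
have c30 : 0 < Num.min 1 (e / (2 * A)) by rewrite lt_min ltr01 c20.
have [d2 d20 H2] := pg _ c30.
exists (Num.min d1 d2); first by rewrite lt_min d10 d20.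
move=> z' hz.
have h1 : `|f z' - f z| < e / (2 * B) by apply: H1 => i; have := hz i; rewrite lt_min => /andP[].
have h2 : `|g z' - g z| < Num.min 1 (e / (2 * A)).
  by apply: H2 => i; have := hz i; rewrite lt_min => /andP[].
move: h2; rewrite lt_min => /andP[h2a h2b].
have hg' : `|g z'| <= B.
  have : `|g z'| <= `|g z' - g z| + `|g z|.
    by rewrite -{1}(subrK (g z) (g z')) ler_normD.
  rewrite /B; lra.
have -> : f z' * g z' - f z * g z = (f z' - f z) * g z' + f z * (g z' - g z) by ring.
apply: le_lt_trans (ler_normD _ _) _; rewrite !normrM.
have t1 : `|f z' - f z| * `|g z'| <= e / (2 * B) * B.
  by apply: ler_pM => //; exact: ltW.
have t2 : `|f z| * `|g z' - g z| <= `|f z| * (e / (2 * A)).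
  by apply: ler_wpM2l => //; exact: ltW.
have E1 : e / (2 * B) * B = e / 2 by field; rewrite gt_eqF.
have E2 : `|f z| * (e / (2 * A)) = e / 2 - e / (2 * A) by rewrite /A; field; rewrite -/A gt_eqF.
lra.
Qed.

Lemma pcont_sum (J : Type) (s : seq J) (P : pred J) (F : J -> (I -> R) -> R) z :
  (forall a, pcont (F a) z) -> pcont (fun x => \sum_(a <- s | P a) F a x) z.
Proof.
move=> H; elim: s => [|a s IH].
  by apply: (pcont_ext (g := fun _ => 0)) => [x|]; rewrite ?big_nil //; exact: pcont_cst.
case Pa: (P a).
  apply: (pcont_ext (g := fun x => F a x + \sum_(a <- s | P a) F a x)) => [x|].
    by rewrite big_cons Pa.
  exact: pcont_add.
by apply: (pcont_ext (g := fun x => \sum_(a <- s | P a) F a x)) => // x; rewrite big_cons Pa.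
Qed.

Lemma pcont_prod (J : Type) (s : seq J) (P : pred J) (F : J -> (I -> R) -> R) z :
  (forall a, pcont (F a) z) -> pcont (fun x => \prod_(a <- s | P a) F a x) z.
Proof.
move=> H; elim: s => [|a s IH].
  by apply: (pcont_ext (g := fun _ => 1)) => [x|]; rewrite ?big_nil //; exact: pcont_cst.
case Pa: (P a).
  apply: (pcont_ext (g := fun x => F a x * \prod_(a <- s | P a) F a x)) => [x|].
    by rewrite big_cons Pa.
  exact: pcont_mul.
by apply: (pcont_ext (g := fun x => \prod_(a <- s | P a) F a x)) => // x; rewrite big_cons Pa.
Qed.

Lemma pcont_exp f z k : pcont f z -> pcont (fun x => f x ^+ k) z.
Proof.
move=> H; elim: k => [|k IH].
  by apply: (pcont_ext (g := fun _ => 1)) => [x|]; rewrite ?expr0 //; exact: pcont_cst.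
apply: (pcont_ext (g := fun x => f x * f x ^+ k)) => [x|]; first by rewrite exprS.
exact: pcont_mul.
Qed.
End PCont.

Lemma pcont_poly (R : realType) (n d : nat) (c : {ffun 'I_n -> 'I_d.+1} -> R) z :
  pcont (fun x : 'I_n -> R => \sum_(a : {ffun 'I_n -> 'I_d.+1} | (\sum_i (a i : nat) <= d)%N)
     c a * \prod_i x i ^+ a i) z.
Proof.
apply: pcont_sum => a; apply: pcont_mul; first exact: pcont_cst.
apply: pcont_prod => i; apply: pcont_exp; exact: pcont_proj.
Qed.

Section ExpZ.
Variable R : realType. Variable n : nat.
Local Notation M := (Mat R n).
Lemma expZB (A B : M) i : expZ A i - expZ B i = expZ (A - B) i.
Proof. by rewrite /expZ mulmxBl linearB /= ReB. Qed.
Lemma expZ_le (A : M) i : `|expZ A i| <= (2 ^ n)%:R * hs_norm A.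
Proof.
rewrite /expZ /mxtrace Re_sum.
apply: le_trans (ler_norm_sum _ _ _) _.
have -> : (2 ^ n)%:R * hs_norm A = \sum_(j < 2 ^ n) hs_norm A.
  by rewrite sumr_const card_ord mulr_natl.
apply: ler_sum => j _; rewrite mxE (bigD1 j) //= big1 ?addr0; last first.
  by move=> k /negbTE hk; rewrite mxE hk mul0r mulr0.
rewrite mxE eqxx mul1r; apply: le_trans (Re_le_hs A j j).
case: ifP => _; last by rewrite mulr1.
by rewrite mulrN1; case: (A j j) => a b /=; rewrite normrN.
Qed.
End ExpZ.

Lemma evolve_shift (R : realType) N (T : R -> 'M[R[i]]_N -> 'M[R[i]]_N) (u : int -> R) k m X :
  evolve T (fun j => u (j + 1)) k m X = evolve T u (k + 1) m X.
Proof.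
elim: m k => [|m IH] k //=. rewrite IH; congr (T _ (evolve _ _ _ _ _)); ring.
Qed.

Lemma evolve_causal (R : realType) N (T : R -> 'M[R[i]]_N -> 'M[R[i]]_N) (u v : int -> R) k :
  (forall j, j <= k -> u j = v j) -> forall m X, evolve T u k m X = evolve T v k m X.
Proof.
move=> H m; elim: m k H => [|m IH] k H X /=; first by rewrite H.
rewrite H // IH // => j hj; apply: H; apply: le_trans hj _; rewrite lerBlDr lerDl //.
Qed.

Lemma extend_neg (R : realType) (um : nat -> R) (j : nat) : extend um (0 - j%:Z) = um j.
Proof. by case: j => [|j] //; rewrite sub0r -NegzE. Qed.

Lemma DL_abs (R : realType) (D : set R) L x : DL D L x -> `|x| <= L.
Proof. by case => _; rewrite /= in_itv /= => /andP[a b]; rewrite ler_norml a b. Qed.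


Lemma w_dec (R : realType) (w : nat -> R) : (forall k, w k.+1 <= w k) ->
  forall j m, (j <= m)%N -> w m <= w j.
Proof.
move=> H j m; elim: m => [|m IH]; first by rewrite leqn0 => /eqP ->.
rewrite leq_eqVlt => /orP[/eqP ->|h] //.
by apply: le_trans (H m) (IH h).
Qed.

Lemma sum3_lt (R : realType) (a b c t g : R) : a <= t -> c <= t -> b <= g / 4 -> 2 * t < g / 4 -> 0 < g -> a + (b + c) < g.
Proof. move=> *; lra. Qed.

Unset Implicit Arguments.
Theorem lemma3 (R : realType) (n : nat) (L : R) (D : set R)
    (T : R -> Mat R n -> Mat R n) (d : nat) (c : {ffun 'I_n -> 'I_d.+1} -> R) :
  (1 <= n)%N -> 0 < L -> compact D ->
  (forall x, DL D L x -> CPTP (T x)) ->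
  (* (i) strict contraction on traceless Hermitian matrices *)
  (exists2 eps : R, 0 < eps <= 1 &
     forall x, DL D L x -> forall A : Mat R n, traceless_herm A -> A != 0 ->
       hs_norm (T x A) / hs_norm A <= 1 - eps) ->
  (* (ii) uniform continuity of T in the induced 2-2 norm *)
  (forall eps' : R, 0 < eps' -> exists2 delta : R, 0 < delta &
     forall x y, DL D L x -> DL D L y -> `|x - y| < delta ->
       opnorm22 (fun A => T x A - T y A) < eps') ->
  forall w : nat -> R, null_seq w ->
    fading_memory_filter D L w (induced_filter T (poly_obs c)) /\
    w_continuous D L w (functional (induced_filter T (poly_obs c))).
Proof.
move=> hn hL hD Hcptp [eps /andP[eps0 eps1] Hi] Hii w [hw1 [hw2 _]].
pose N := (2 ^ n)%N.
pose q := 1 - eps.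
have hq0 : 0 <= q by rewrite /q subr_ge0.
have hq1 : q < 1 by rewrite /q ltrBlDr ltrDl.
have Hcon : forall x, DL D L x -> forall A : Mat R n, traceless_herm A ->
    hs_norm (T x A) <= q * hs_norm A.
  move=> x hx A hA; have [->|A0] := eqVneq A 0.
    by rewrite (lin0 (Hcptp x hx).1) hs_norm0 mulr0.
  have ap : 0 < hs_norm A.
    rewrite lt_def hs_norm_ge0 andbT; apply/eqP => /hs_norm_eq0 h.
    by rewrite h eqxx in A0.
  by rewrite -(ler_pdivrMr _ _ ap); exact: Hi.
have N0 : (0 < N)%N by rewrite /N expn_gt0.
pose i0 : 'I_N := Ordinal N0.
pose r0 : Mat R n := \matrix_(i, j) ((i == i0)%:R * (j == i0)%:R).
have hr0 : density r0.
  split.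
    move=> v; rewrite (bigD1 i0) //= [X in _ + X]big1 ?addr0; last first.
      move=> p; rewrite ?andTb => /negbTE hp; rewrite big1 // => j _; rewrite mxE hp mul0r mulr0 mul0r //.
    rewrite (bigD1 i0) //= big1 ?addr0; last first.
      by move=> j; rewrite ?andTb => /negbTE hj; rewrite mxE hj mulr0 mulr0 mul0r.
    by rewrite mxE eqxx mulr1 mulr1 mulrC mulcJ_ge0.
  rewrite /mxtrace (bigD1 i0) //= big1 ?addr0; last first.
    by move=> j; rewrite ?andTb => /negbTE hj; rewrite mxE hj mul0r.
  by rewrite mxE eqxx mulr1.
have wc : w_continuous D L w (functional (induced_filter T (poly_obs c))).
  move=> um Hum e e0.
  pose U := extend um.
  have HU : forall k, DL D L (U k) by case=> ?; apply: Hum.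
  pose Y := limit_state T U 0.
  pose z0 := fun i => expZ Y i.
  have [dh dh0 Hh] := pcont_poly c z0 e0.
  pose g := dh / (N%:R + 1).
  have g0 : 0 < g by rewrite divr_gt0 // ltr_wpDl.
  have g4 : 0 < g / 4 by rewrite divr_gt0.
  have [M0 _ HM] := cvgr0_norm_lt _ (cvg_geo hq0 hq1 (2 * Kc R N)) _ g4.
  pose m := M0.
  have Hm : 2 * Kc R N * q ^+ m.+1 < g / 4.
    have := HM m (leqnn _); rewrite /= ger0_norm // mulr_ge0 ?exprn_ge0 //.
    by rewrite mulr_ge0 // Kc_ge0.
  pose eta := g / (4 * (m.+1%:R * (Bd R N + 1))).
  have eta0 : 0 < eta.
    by rewrite divr_gt0 // !mulr_gt0 // ?ltr0Sn // ltr_wpDl // Bd_ge0.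
  have [dT dT0 HT] := Hii eta eta0.
  exists (dT * w m); first by rewrite mulr_gt0 //; case/andP: (hw1 m).
  move=> v Hv huv.
  pose V := extend v.
  have HV : forall k, DL D L (V k) by case=> ?; apply: Hv.
  pose Y' := limit_state T V 0.
  have hub : has_ubound (range (fun j => `|(um - v) j| * w j)).
    exists (L + L) => _ [j _ <-] /=.
    have /andP[w0 w1] := hw1 j.
    apply: le_trans (_ : `|um j - v j| * 1 <= _).
      by apply: ler_wpM2l.
    rewrite mulr1; apply: le_trans (ler_normB _ _) _.
    by apply: lerD; apply: DL_abs.
  have Hop : forall j, (j <= m)%N ->
      opnorm22 (fun A => T (U (0 - j%:Z)) A - T (V (0 - j%:Z)) A) <= eta.
    move=> j hj; apply: ltW; apply: HT => //.
    rewrite /U /V !extend_neg.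
    have wj0 : 0 < w j by case/andP: (hw1 j).
    have h1 : `|um j - v j| * w j <= wnorm w (um - v).
      by apply: (ub_le_sup hub); exists j.
    have h2 : dT * w m <= dT * w j by apply: ler_wpM2l; [exact: ltW | exact: w_dec].
    have h3 : `|um j - v j| * w j < dT * w j by apply: le_lt_trans h1 (lt_le_trans huv h2).
    by rewrite -(ltr_pM2r wj0).
  have hdiff := evolve_diff hq1 Hcptp Hcon HU HV (ltW eta0) hr0 Hop.
  have hY := lim_state_bound hq0 hq1 Hcptp Hcon hr0 HU 0 m hr0.
  have hY' := lim_state_bound hq0 hq1 Hcptp Hcon hr0 HV 0 m hr0.
  have hYY : hs_norm (Y' - Y) < g.
    rewrite hs_normB.
    apply: le_lt_trans (hs_norm_tri _ _ (evolve T U 0 m r0)) _.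
    apply: le_lt_trans (lerD (le_refl _) (hs_norm_tri _ _ (evolve T V 0 m r0))) _.
    rewrite hs_normB.
    have Bd0 := Bd_ge0 R N.
    have hm : m.+1%:R * (Bd R N * eta) <= g / 4.
      have E : m.+1%:R * (Bd R N * eta) = g / 4 * (Bd R N / (Bd R N + 1)).
        rewrite /eta; field.
        apply/andP; split; rewrite gt_eqF //; apply: (lt_le_trans ltr01).
          by rewrite lerDr.
      rewrite E; apply: ler_piMr; first exact: ltW.
      have Bd1 : 0 < Bd R N + 1 by apply: (lt_le_trans ltr01); rewrite lerDr.
      by rewrite (ler_pdivrMr _ _ Bd1) mul1r lerDl.
    rewrite -mulrA in Hm; exact: sum3_lt hY hY' (le_trans hdiff hm) Hm g0.
  have Hz : forall i, `|(fun i => expZ Y' i) i - z0 i| < dh.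
    move=> i; rewrite /z0 expZB; apply: le_lt_trans (expZ_le _ _) _.
    apply: le_lt_trans (_ : _ <= N%:R * g) _.
      by apply: ler_wpM2l; [exact: ler0n | exact: ltW].
    have N1 : (0:R) < N%:R + 1 by apply: (lt_le_trans ltr01); rewrite lerDr.
    by rewrite /g mulrA (ltr_pdivrMr _ _ N1) mulrDr mulr1 [N%:R * dh]mulrC ltrDl.
  rewrite /functional /induced_filter /poly_obs distrC.
  have h := Hh _ Hz; rewrite /= /z0 /Y /Y' /U /V in h.
  exact: h.
split; last exact: wc.
split; last split; last exact: wc.
  move=> u k _; rewrite /induced_filter /limit_state.
  have -> : evolve T (fun j => u (j + 1)) = fun k => evolve T u (k + 1).
    apply: funext => k'; apply: funext => m'; apply: funext => X; exact: evolve_shift.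
  reflexivity.
move=> u v k _ _ H; rewrite /induced_filter /limit_state.
have -> : evolve T u k = evolve T v k.
  apply: funext => m'; apply: funext => X; exact: evolve_causal.
reflexivity.
Qed.
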